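(* Let $y$ be the solution of the problem $\varepsilon^2 y''(x)=f(x,y)$ on $(0,1)$, $y(0)=y(1)=0$, with $f$ and the Shishkin mesh $\{x_i\}_{i=0}^N$ as described in the context, and let $F$ be the discrete operator defined in the context. Assume that $\varepsilon\leqslant C_0/N$ for some constant $C_0>0$. Then there is a constant $C>0$ independent of $N$ and $\varepsilon$ such that, for the indices $i\in\{N/4,\ldots,N/2-1\}$ with $x_{i-1},x_i,x_{i+1}\in[x_{N/4},1/2]$, $$|(Fy)_i|\leqslant \frac{C}{N^2},$$ where $(Fy)_i$ denotes the $i$-th component of $F$ applied to the vector $(y(x_0),\ldots,y(x_N))^T$.
   Context: Problem: $\varepsilon^2y''(x)=f(x,y)$ on $(0,1)$, $y(0)=y(1)=0$, where $\varepsilon>0$ is a small parameter, $f\in C^k([0,1]\times\mathbb{R})$ for some $k\geq 2$, and $f_y=\partial f/\partial y\geq m>0$ on $[0,1]\times\mathbb{R}$ for a constant $m$; this problem has a unique solution $y$. Shishkin mesh: $N$ is a positive integer divisible by 4, $\lambda=\min\{1/4,\,2\varepsilon\ln N/\sqrt{m}\}$, and it is assumed that $\lambda=2\varepsilon\ln N/\sqrt{m}$. The mesh $0=x_0<x_1<\cdots<x_N=1$ is equidistant on each of $[0,\lambda]$ (with $N/4$ subintervals), $[\lambda,1-\lambda]$ (with $N/2$ subintervals) and $[1-\lambda,1]$ (with $N/4$ subintervals); thus $x_{N/4}=\lambda$, $x_{3N/4}=1-\lambda$, $x_{N/2}=1/2$, subintervals in $[0,\lambda]\cup[1-\lambda,1]$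 have length $4\lambda/N$ and those in $[\lambda,1-\lambda]$ have length $2(1-2\lambda)/N$. Scheme: $\gamma$ is a constant with $\gamma\geq f_y$, and $\beta=\sqrt{\gamma}/\varepsilon$. For $i=1,\ldots,N$ let $\ell_i=x_i-x_{i-1}$, $d_i=\beta/\tanh(\beta\ell_i)$, $a_i=\beta/\sinh(\beta\ell_i)$, $\Delta d_i=d_i-a_i$. For $v=(v_0,\ldots,v_N)^T\in\mathbb{R}^{N+1}$ define $Fv\in\mathbb{R}^{N+1}$ by $(Fv)_0=v_0$, $(Fv)_N=v_N$ and, for $i=1,\ldots,N-1$, $$(Fv)_i=\frac{\gamma}{\Delta d_i+\Delta d_{i+1}}\Big[\tfrac{a_i+d_i}{2}v_{i-1}-\big(\tfrac{a_i+d_i}{2}+\tfrac{a_{i+1}+d_{i+1}}{2}\big)v_i+\tfrac{a_{i+1}+d_{i+1}}{2}v_{i+1}-\tfrac{\Delta d_i}{\gamma}f\big(\tfrac{x_{i-1}+x_i}{2},\tfrac{v_{i-1}+v_i}{2}\big)-\tfrac{\Delta d_{i+1}}{\gamma}f\big(\tfrac{x_{i}+x_{i+1}}{2},\tfrac{v_{i}+v_{i+1}}{2}\big)\Big].$$ *)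

(* Defs.v *)
From Stdlib Require Import Reals.
From Coquelicot Require Import Coquelicot.
Open Scope R_scope.

Fixpoint Ck (k : nat) (f : R -> R -> R) : Prop :=
  match k with
  | O => forall p : R * R, continuous (fun q : R * R => f (fst q) (snd q)) p
  | S k' =>
      (forall p : R * R, continuous (fun q : R * R => f (fst q) (snd q)) p) /\
      exists fx fy : R -> R -> R,
        (forall x y, is_derive (fun t => f t y) x (fx x y)) /\
        (forall x y, is_derive (fun t => f x t) y (fy x y)) /\
        Ck k' fx /\ Ck k' fy
  end.

Definition shlambda (eps m : R) (N : nat) : R :=
  Rmin (1/4) (2 * eps * ln (INR N) / sqrt m).

Definition shmesh (eps m : R) (N i : nat) : R :=
  let lam := shlambda eps m N in
  if (i <=? N / 4)%nat then INR i * (4 * lam / INR N)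
  else if (i <=? 3 * N / 4)%nat then
    lam + INR (i - N / 4) * (2 * (1 - 2 * lam) / INR N)
  else (1 - lam) + INR (i - 3 * N / 4) * (4 * lam / INR N).

Section Scheme.
Variables (eps m gamma : R) (N : nat) (f : R -> R -> R).

Definition xm (i : nat) : R := shmesh eps m N i.
Definition beta : R := sqrt gamma / eps.
Definition ell (i : nat) : R := xm i - xm (i - 1).
Definition dd (i : nat) : R := beta / tanh (beta * ell i).
Definition aa (i : nat) : R := beta / sinh (beta * ell i).
Definition Ddd (i : nat) : R := dd i - aa i.

Definition Fop (v : nat -> R) (i : nat) : R :=
  if (i =? 0)%nat then v 0%nat
  else if (i =? N)%nat then v N
  else gamma / (Ddd i + Ddd (i + 1)) *
    ( (aa i + dd i) / 2 * v (i - 1)%nat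
      - ((aa i + dd i) / 2 + (aa (i + 1) + dd (i + 1)) / 2) * v i
      + (aa (i + 1) + dd (i + 1)) / 2 * v (i + 1)%nat
      - Ddd i / gamma * f ((xm (i - 1) + xm i) / 2) ((v (i - 1)%nat + v i) / 2)
      - Ddd (i + 1) / gamma * f ((xm i + xm (i + 1)) / 2) ((v i + v (i + 1)%nat) / 2)).
End Scheme.

(* Main.v *)
Require Import Defs.
From Stdlib Require Import Reals Lra Lia Psatz ClassicalEpsilon.
From Coquelicot Require Import Coquelicot.
Open Scope R_scope.

Lemma cont2 (F : R -> R -> R) a u :
  continuous (fun q : R * R => F (fst q) (snd q)) (a, u) ->
  forall e, 0 < e -> exists d, 0 < d /\ forall a' u', Rabs (a' - a) < d -> Rabs (u' - u) < d ->
    Rabs (F a' u' - F a u) < e.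
Proof.
  intros H e He.
  assert (H2 : continuity_2d_pt F a u) by (apply continuity_2d_pt_filterlim; exact H).
  destruct (H2 (mkposreal e He)) as [d Hd].
  exists d; split; [apply cond_pos|]. intros; apply Hd; auto.
Qed.

Lemma deriv_cont g t l : is_derive g t l -> continuity_pt g t.
Proof.
  intro H. apply derivable_continuous_pt. exists l. apply is_derive_Reals. exact H.
Qed.

Lemma lip (g dg : R -> R) a b M :
  (forall t, Rmin a b <= t <= Rmax a b -> is_derive g t (dg t)) ->
  (forall t, Rmin a b <= t <= Rmax a b -> Rabs (dg t) <= M) ->
  Rabs (g b - g a) <= M * Rabs (b - a).
Proof.
  intros Hd HM.
  destruct (MVT_gen g a b dg) as [c [Hc Hc2]].
  - intros t Ht; apply Hd; lra.
  - intros t Ht; apply (deriv_cont g t (dg t)); apply Hd; lra.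
  - rewrite Hc2, Rabs_mult. apply Rmult_le_compat_r; [apply Rabs_pos|]. apply HM; lra.
Qed.

Lemma mono (g dg : R -> R) lo hi a b :
  a <= b ->
  (forall t, a <= t <= b -> is_derive g t (dg t)) ->
  (forall t, a <= t <= b -> lo <= dg t <= hi) ->
  lo * (b - a) <= g b - g a <= hi * (b - a).
Proof.
  intros Hab Hd HM.
  destruct (MVT_gen g a b dg) as [c [Hc Hc2]].
  - intros t Ht; apply Hd; rewrite Rmin_left, Rmax_right in Ht; lra.
  - intros t Ht; apply (deriv_cont g t (dg t)); apply Hd; rewrite Rmin_left, Rmax_right in Ht; lra.
  - rewrite Rmin_left, Rmax_right in Hc by lra. rewrite Hc2.
    destruct (HM c Hc). split; apply Rmult_le_compat_r; lra.
Qed.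

Lemma cont_comp2 (F : R -> R -> R) (u v : R -> R) t :
  (forall p, continuous (fun q : R * R => F (fst q) (snd q)) p) ->
  continuity_pt u t -> continuity_pt v t -> continuity_pt (fun s => F (u s) (v s)) t.
Proof.
  intros HF Hu Hv.
  apply continuity_pt_filterlim.
  apply (continuous_comp_2 u v F).
  - apply continuity_pt_filterlim; exact Hu.
  - apply continuity_pt_filterlim; exact Hv.
  - apply HF.
Qed.


Lemma mvt (g dg : R -> R) a b :
  a <= b -> (forall t, a <= t <= b -> is_derive g t (dg t)) ->
  exists c, a <= c <= b /\ g b - g a = dg c * (b - a).
Proof.
  intros Hab Hd.
  destruct (MVT_gen g a b dg) as [c [Hc Hc2]].
  - intros t Ht; apply Hd; rewrite Rmin_left, Rmax_right in Ht; lra.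
  - intros t Ht; apply (deriv_cont g t (dg t)); apply Hd; rewrite Rmin_left, Rmax_right in Ht; lra.
  - rewrite Rmin_left, Rmax_right in Hc by lra. exists c; auto.
Qed.

Lemma divpos a b : 0 < a / b -> 0 < b -> 0 < a.
Proof. intros H Hb. replace a with (a / b * b) by (field; lra). nra. Qed.

Lemma MP (g dg ddg : R -> R) :
 (forall t, 0 <= t <= 1 -> continuity_pt g t) ->
 (forall t, 0 < t < 1 -> is_derive g t (dg t)) ->
 (forall t, 0 < t < 1 -> is_derive dg t (ddg t)) ->
 g 0 <= 0 -> g 1 <= 0 ->
 (forall t, 0 < t < 1 -> 0 < g t -> 0 < ddg t) ->
 forall t, 0 <= t <= 1 -> g t <= 0.
Proof.
  intros Hc Hd Hdd H0 H1 Hpos t Ht.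
  destruct (Rle_or_lt (g t) 0) as [|Hgt]; [assumption|exfalso].
  destruct (continuity_ab_maj g 0 1 ltac:(lra) Hc) as [xs [Hmax Hxs]].
  assert (Hgxs := Hmax t Ht).
  assert (Hxs2 : 0 < xs < 1).
  { split; destruct (Req_dec xs 0); destruct (Req_dec xs 1); subst; try lra. }
  assert (HL := Hpos xs Hxs2 ltac:(lra)).
  assert (HD := Hdd xs Hxs2). apply is_derive_Reals in HD.
  destruct (HD (ddg xs) HL) as [del Hdel].
  assert (Hq : forall h, h <> 0 -> Rabs h < del -> 0 < (dg (xs + h) - dg xs) / h).
  { intros h Hh Hh2. specialize (Hdel h Hh Hh2).
    apply Rabs_def2 in Hdel. lra. }
  assert (Hdelp := cond_pos del).
  destruct (Rle_or_lt 0 (dg xs)) as [Hs|Hs].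
  - set (d := Rmin del (1 - xs) / 2).
    assert (Hd1 : 0 < d) by (unfold d; apply Rmin_case; lra).
    assert (Hd2 : d < del) by (unfold d; assert (Rmin del (1-xs) <= del) by apply Rmin_l; lra).
    assert (Hd3 : d < 1 - xs) by (unfold d; assert (Rmin del (1-xs) <= 1-xs) by apply Rmin_r; lra).
    assert (Hpd : forall s, xs < s <= xs + d -> 0 < dg s).
    { intros s Hs'. assert (HH := Hq (s - xs) ltac:(lra) ltac:(rewrite Rabs_pos_eq; lra)).
      replace (xs + (s - xs)) with s in HH by ring.
      pose proof (divpos _ _ HH ltac:(lra)); lra. }
    destruct (mvt g dg xs (xs + d/2)) as [c1 [Hc1 E1]]; [lra| intros; apply Hd; lra |].
    destruct (mvt g dg (xs + d/2) (xs + d)) as [c2 [Hc2 E2]]; [lra| intros; apply Hd; lra |].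
    assert (0 <= dg c1).
    { destruct (Req_dec c1 xs); [subst; lra|]. apply Rlt_le, Hpd; lra. }
    assert (0 < dg c2) by (apply Hpd; lra).
    assert (Hm := Hmax (xs + d) ltac:(lra)). nra.
  - set (d := Rmin del xs / 2).
    assert (Hd1 : 0 < d) by (unfold d; apply Rmin_case; lra).
    assert (Hd2 : d < del) by (unfold d; assert (Rmin del xs <= del) by apply Rmin_l; lra).
    assert (Hd3 : d < xs) by (unfold d; assert (Rmin del xs <= xs) by apply Rmin_r; lra).
    assert (Hpd : forall s, xs - d <= s < xs -> dg s < 0).
    { intros s Hs'. assert (HH := Hq (s - xs) ltac:(lra) ltac:(rewrite Rabs_left; lra)).
      replace (xs + (s - xs)) with s in HH by ring.
      assert (0 < - (dg s - dg xs) / - (s - xs)) by (replace (- (dg s - dg xs) / - (s - xs)) with ((dg s - dg xs) / (s - xs)) by (field; lra); exact HH).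
      pose proof (divpos _ _ H ltac:(lra)); lra. }
    destruct (mvt g dg (xs - d/2) xs) as [c1 [Hc1 E1]]; [lra| intros; apply Hd; lra |].
    destruct (mvt g dg (xs - d) (xs - d/2)) as [c2 [Hc2 E2]]; [lra| intros; apply Hd; lra |].
    assert (dg c1 <= 0).
    { destruct (Req_dec c1 xs); [subst; lra|]. apply Rlt_le, Hpd; lra. }
    assert (dg c2 < 0) by (apply Hpd; lra).
    assert (Hm := Hmax (xs - d) ltac:(lra)). nra.
Qed.


Lemma Ck_down n f : Ck (S n) f -> Ck n f.
Proof.
  revert f; induction n as [|n IH]; intros f H.
  - destruct H as [H _]; exact H.
  - destruct H as [Hc [fx [fy [H1 [H2 [H3 H4]]]]]].
    split; [exact Hc|]. exists fx, fy. split; [exact H1|]. split; [exact H2|]. split; apply IH; assumption.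
Qed.

Lemma Ck_ge k f : (2 <= k)%nat -> Ck k f -> Ck 2 f.
Proof.
  intros Hk H. induction k as [|k IH]; [lia|].
  destruct (Nat.eq_dec k 1) as [->|]; [exact H|].
  apply IH; [lia|]. apply Ck_down; exact H.
Qed.

Lemma diffpt (g gx gy : R -> R -> R) :
  (forall x y, is_derive (fun t => g t y) x (gx x y)) ->
  (forall x y, is_derive (fun t => g x t) y (gy x y)) ->
  (forall p, continuous (fun q : R * R => gx (fst q) (snd q)) p) ->
  forall x y, differentiable_pt_lim g x y (gx x y) (gy x y).
Proof.
  intros Hx Hy Hc x y.
  apply filterdiff_differentiable_pt_lim.
  apply (is_derive_filterdiff g x y gx (gy x y)).
  - apply filter_forall. intros u. apply Hx.
  - apply Hy.
  - apply Hc.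
Qed.

Lemma chain (g : R -> R -> R) u v t du dv a b :
  is_derive u t du -> is_derive v t dv -> differentiable_pt_lim g (u t) (v t) a b ->
  is_derive (fun s => g (u s) (v s)) t (a * du + b * dv).
Proof.
  intros Hu Hv Hg. apply is_derive_Reals.
  apply derivable_pt_lim_comp_2d; auto; apply is_derive_Reals; auto.
Qed.


Definition HF (f fx fy : R -> R -> R) (m gamma : R) : Prop :=
 (forall p, continuous (fun q : R * R => f (fst q) (snd q)) p) /\
 (forall p, continuous (fun q : R * R => fx (fst q) (snd q)) p) /\
 (forall x y, is_derive (fun t => f t y) x (fx x y)) /\
 (forall x y, is_derive (fun t => f x t) y (fy x y)) /\
 (forall x u, 0 <= x <= 1 -> m <= fy x u <= gamma) /\ 0 < m.

Definition clamp (x : R) : R := Rmax 0 (Rmin x 1).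

Lemma clamp_in x : 0 <= clamp x <= 1.
Proof. unfold clamp, Rmax, Rmin; repeat destruct Rle_dec; lra. Qed.
Lemma clamp_lip x x' : Rabs (clamp x' - clamp x) <= Rabs (x' - x).
Proof. unfold clamp, Rmax, Rmin; repeat destruct Rle_dec; unfold Rabs; repeat destruct Rcase_abs; lra. Qed.
Lemma clamp_id x : 0 <= x <= 1 -> clamp x = x.
Proof. intros; unfold clamp, Rmax, Rmin; repeat destruct Rle_dec; lra. Qed.

Lemma slope f fx fy m gamma x u v : HF f fx fy m gamma -> 0 <= x <= 1 ->
  m * Rabs (u - v) <= Rabs (f x u - f x v) <= gamma * Rabs (u - v).
Proof.
  intros (Hc & Hcx & Hdx & Hdy & Hb & Hm) Hx.
  assert (Hg : forall a b, a <= b -> m * (b - a) <= f x b - f x a <= gamma * (b - a)).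
  { intros a b Hab. apply (mono (fun t => f x t) (fun t => fy x t)); auto. }
  destruct (Rle_or_lt v u) as [H|H].
  - destruct (Hg v u H). rewrite !Rabs_pos_eq; nra.
  - destruct (Hg u v ltac:(lra)). rewrite !Rabs_left1; nra.
Qed.

Lemma root_ex f fx fy m gamma x : HF f fx fy m gamma -> 0 <= x <= 1 -> exists u, f x u = 0.
Proof.
  intros H Hx. pose proof H as (Hc & Hcx & Hdx & Hdy & Hb & Hm).
  set (U := Rabs (f x 0) / m + 1).
  assert (HU : m * U = Rabs (f x 0) + m) by (unfold U; field; lra).
  assert (0 < U) by (unfold U; assert (0 <= Rabs (f x 0) / m) by (apply Rdiv_le_0_compat; [apply Rabs_pos|lra]); lra).
  assert (Hg : forall a b, a <= b -> m * (b - a) <= f x b - f x a).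
  { intros a b Hab. apply (mono (fun t => f x t) (fun t => fy x t) m gamma); auto. }
  assert (H1 := Hg 0 U ltac:(lra)). assert (H2 := Hg (-U) 0 ltac:(lra)).
  assert (Habs := Rabs_pos (f x 0)). pose proof (Rle_abs (f x 0)). pose proof (Rle_abs (- f x 0)). rewrite Rabs_Ropp in *.
  destruct (IVT (fun t => f x t) (-U) U) as [z [_ Hz]].
  - intro t. apply (deriv_cont _ t (fy x t)). apply Hdy.
  - lra.
  - simpl. nra.
  - simpl. nra.
  - exists z; exact Hz.
Qed.

Definition y0 (f : R -> R -> R) (x : R) : R := epsilon (inhabits 0) (fun u => f (clamp x) u = 0).

Lemma y0_root f fx fy m gamma x : HF f fx fy m gamma -> f (clamp x) (y0 f x) = 0.
Proof.
  intros H. unfold y0. apply epsilon_spec. apply (root_ex f fx fy m gamma); auto. apply clamp_in.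
Qed.

Lemma y0_cont f fx fy m gamma x : HF f fx fy m gamma -> continuity_pt (y0 f) x.
Proof.
  intros H. pose proof H as (Hc & Hcx & Hdx & Hdy & Hb & Hm).
  intros e He.
  destruct (cont2 f (clamp x) (y0 f x) (Hc _) (e * m) ltac:(nra)) as [d [Hd Hd2]].
  exists d; split; [lra|]. intros x' [_ Hx']. simpl in *. unfold R_dist in *.
  assert (Hs := slope f fx fy m gamma (clamp x') (y0 f x') (y0 f x) H (clamp_in x')).
  rewrite (y0_root f fx fy m gamma x' H) in Hs.
  assert (Hk : Rabs (f (clamp x') (y0 f x) - f (clamp x) (y0 f x)) < e * m).
  { apply Hd2. pose proof (clamp_lip x x'). lra. rewrite Rminus_diag, Rabs_R0; lra. }
  rewrite (y0_root f fx fy m gamma x H) in Hk.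
  replace (0 - f (clamp x') (y0 f x)) with (- (f (clamp x') (y0 f x) - 0)) in Hs by ring.
  rewrite Rabs_Ropp in Hs. nra.
Qed.

Lemma y0_der f fx fy m gamma x : HF f fx fy m gamma -> 0 < x < 1 ->
  is_derive (y0 f) x (- fx x (y0 f x) / fy x (y0 f x)).
Proof.
  intros H Hx. pose proof H as (Hc & Hcx & Hdx & Hdy & Hb & Hm).
  apply is_derive_Reals. intros e He.
  set (Y := y0 f x). set (a := fx x Y). set (b := fy x Y).
  assert (Hbm : m <= b <= gamma) by (apply Hb; lra).
  set (L := (Rabs a + 1) / m).
  assert (HL : 0 < L) by (unfold L; pose proof (Rabs_pos a); apply Rdiv_lt_0_compat; lra).
  assert (Hdiff := diffpt f fx fy Hdx Hdy Hcx x Y).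
  assert (He' : 0 < e * m / (2 * (1 + L))) by (apply Rdiv_lt_0_compat; nra).
  destruct (Hdiff (mkposreal _ He')) as [d1 Hd1]. simpl in Hd1.
  destruct (cont2 fx x Y (Hcx _) 1 ltac:(lra)) as [d2 [Hd2 Hd2']].
  assert (Hd12 : 0 < Rmin d1 d2) by (apply Rmin_case; [apply cond_pos|lra]).
  destruct (y0_cont f fx fy m gamma x H (Rmin d1 d2) Hd12) as [d3 [Hd3 Hd3']].
  assert (Hdp : 0 < Rmin (Rmin d1 d2) (Rmin d3 (Rmin x (1 - x)))).
  { repeat apply Rmin_case; try lra; apply cond_pos. }
  exists (mkposreal _ Hdp). intros h Hh Hhd. simpl in Hhd.
  assert (Hm1 := Rmin_l (Rmin d1 d2) (Rmin d3 (Rmin x (1 - x)))).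
  assert (Hm2 := Rmin_r (Rmin d1 d2) (Rmin d3 (Rmin x (1 - x)))).
  assert (Hm3 := Rmin_l d1 d2). assert (Hm4 := Rmin_r d1 d2).
  assert (Hm5 := Rmin_l d3 (Rmin x (1 - x))). assert (Hm6 := Rmin_r d3 (Rmin x (1 - x))).
  assert (Hm7 := Rmin_l x (1 - x)). assert (Hm8 := Rmin_r x (1 - x)).
  assert (Hhx : 0 < x + h < 1) by (apply Rabs_def2 in Hhd; lra).
  set (Y' := y0 f (x + h)).
  assert (R1 : f (x + h) Y' = 0) by (rewrite <- (clamp_id (x + h)) by lra; apply (y0_root f fx fy m gamma); auto).
  assert (R0 : f x Y = 0) by (rewrite <- (clamp_id x) at 1 by lra; apply (y0_root f fx fy m gamma); auto).
  assert (HY' : Rabs (Y' - Y) < Rmin d1 d2).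
  { apply Hd3'. split. split; [exact I| lra]. simpl. unfold R_dist. replace (x + h - x) with h by ring. lra. }
  assert (Hlip : Rabs (f (x + h) Y - f x Y) <= (Rabs a + 1) * Rabs (x + h - x)).
  { apply (lip (fun t => f t Y) (fun t => fx t Y)).
    - intros t _. apply Hdx.
    - intros t Ht.
      assert (Rabs (t - x) < d2).
      { revert Ht. unfold Rmin, Rmax; destruct Rle_dec; intros; apply Rabs_def2 in Hhd; apply Rabs_def1; lra. }
      assert (Hq := Hd2' t Y H0 ltac:(rewrite Rminus_diag, Rabs_R0; lra)).
      fold a in Hq. pose proof (Rabs_triang_inv (fx t Y) a). lra. }
  replace (x + h - x) with h in Hlip by ring.
  assert (Hs := slope f fx fy m gamma (x + h) Y' Y H ltac:(lra)).
  rewrite R1 in Hs. rewrite R0 in Hlip.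
  replace (0 - f (x + h) Y) with (- (f (x + h) Y - 0)) in Hs by ring. rewrite Rabs_Ropp in Hs.
  assert (HLip : Rabs (Y' - Y) <= L * Rabs h).
  { unfold L. apply (Rmult_le_reg_l m); [lra|]. field_simplify; [|lra]. lra. }
  assert (HD := Hd1 (x + h) Y' ltac:(replace (x + h - x) with h by ring; lra) ltac:(lra)).
  rewrite R1, R0 in HD. replace (x + h - x) with h in HD by ring. fold a b in HD.
  assert (HR : Rmax (Rabs h) (Rabs (Y' - Y)) <= (1 + L) * Rabs h).
  { pose proof (Rabs_pos h). apply Rmax_case; nra. }
  assert (Hh0 : 0 < Rabs h) by (apply Rabs_pos_lt; auto).
  replace ((Y' - Y) / h - - a / b) with ((a * h + b * (Y' - Y)) / (b * h)) by (field; split; lra).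
  unfold Rdiv. rewrite Rabs_mult, Rabs_Rinv by (apply Rmult_integral_contrapositive; split; lra).
  rewrite Rabs_mult, (Rabs_pos_eq b) by lra.
  replace (0 - 0 - (a * h + b * (Y' - Y))) with (- (a * h + b * (Y' - Y))) in HD by ring.
  rewrite Rabs_Ropp in HD.
  apply (Rmult_lt_reg_r (b * Rabs h)); [nra|].
  rewrite Rmult_assoc, Rinv_l by nra. rewrite Rmult_1_r.
  assert (HH : e * m / (2 * (1 + L)) * Rmax (Rabs h) (Rabs (Y' - Y)) <= e * m / 2 * Rabs h).
  { apply Rle_trans with (e * m / (2 * (1 + L)) * ((1 + L) * Rabs h)).
    - apply Rmult_le_compat_l; lra.
    - right. field. lra. }
  assert (e * m / 2 * Rabs h < e * (b * Rabs h)).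
  { assert (0 < e * Rabs h * (b - m / 2)) by (apply Rmult_lt_0_compat; [apply Rmult_lt_0_compat|]; lra).
    nra. }
  lra.
Qed.


Lemma cp_mult f g x : continuity_pt f x -> continuity_pt g x -> continuity_pt (fun t => f t * g t) x.
Proof. intros; apply (continuity_pt_mult f g); auto. Qed.
Lemma cp_plus f g x : continuity_pt f x -> continuity_pt g x -> continuity_pt (fun t => f t + g t) x.
Proof. intros; apply (continuity_pt_plus f g); auto. Qed.
Lemma cp_minus f g x : continuity_pt f x -> continuity_pt g x -> continuity_pt (fun t => f t - g t) x.
Proof. intros; apply (continuity_pt_minus f g); auto. Qed.
Lemma cp_opp f x : continuity_pt f x -> continuity_pt (fun t => - f t) x.
Proof. intros; apply (continuity_pt_opp f); auto. Qed.
Lemma cp_div f g x : continuity_pt f x -> continuity_pt g x -> g x <> 0 -> continuity_pt (fun t => f t / g t) x.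
Proof. intros; apply (continuity_pt_div f g); auto. Qed.
Lemma cp_pow2 f x : continuity_pt f x -> continuity_pt (fun t => f t ^ 2) x.
Proof. intros; apply (cp_mult f (fun t => f t ^ 1)); auto. simpl. apply (cp_mult f (fun _ => 1)); auto. apply continuity_pt_const. intros a b; auto. Qed.
Lemma cp_abs f x : continuity_pt f x -> continuity_pt (fun t => Rabs (f t)) x.
Proof. intros H. apply (continuity_pt_comp f Rabs); auto. apply Rcontinuity_abs. Qed.

Lemma clamp_cont x : continuity_pt clamp x.
Proof.
  intros e He. exists e; split; auto. intros x' [_ H]. simpl in *. unfold R_dist in *.
  pose proof (clamp_lip x x'). lra.
Qed.

Definition HF2 (fx fy fxx fxy fyx fyy : R -> R -> R) : Prop :=
  (forall x y, is_derive (fun t => fx t y) x (fxx x y)) /\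
  (forall x y, is_derive (fun t => fx x t) y (fxy x y)) /\
  (forall x y, is_derive (fun t => fy t y) x (fyx x y)) /\
  (forall x y, is_derive (fun t => fy x t) y (fyy x y)) /\
  (forall p, continuous (fun q : R * R => fy (fst q) (snd q)) p) /\
  (forall p, continuous (fun q : R * R => fxx (fst q) (snd q)) p) /\
  (forall p, continuous (fun q : R * R => fxy (fst q) (snd q)) p) /\
  (forall p, continuous (fun q : R * R => fyx (fst q) (snd q)) p) /\
  (forall p, continuous (fun q : R * R => fyy (fst q) (snd q)) p).

Definition Pg (fx fy : R -> R -> R) s Y := - fx s Y / fy s Y.
Definition Qg (fx fy fxx fxy fyx fyy : R -> R -> R) s Y :=
  - ((fxx s Y + fxy s Y * Pg fx fy s Y) * fy s Y - fx s Y * (fyx s Y + fyy s Y * Pg fx fy s Y)) / (fy s Y) ^ 2.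

Lemma is_derive_eq (g : R -> R) x l l' : is_derive g x l -> l = l' -> is_derive g x l'.
Proof. intros H ->; exact H. Qed.

Lemma P_der f fx fy fxx fxy fyx fyy m gamma x : HF f fx fy m gamma -> HF2 fx fy fxx fxy fyx fyy -> 0 < x < 1 ->
  is_derive (fun t => Pg fx fy t (y0 f t)) x (Qg fx fy fxx fxy fyx fyy x (y0 f x)).
Proof.
  intros H H2 Hx. pose proof H as (Hc & Hcx & Hdx & Hdy & Hb & Hm).
  destruct H2 as (Hxx & Hxy & Hyx & Hyy & Hcy & Cxx & Cxy & Cyx & Cyy).
  assert (Hy0 := y0_der f fx fy m gamma x H Hx).
  set (Y := y0 f x) in *.
  assert (HN := chain fx (fun s => s) (y0 f) x 1 _ _ _ (is_derive_id x) Hy0 (diffpt fx fxx fxy Hxx Hxy Cxx x Y)).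
  assert (HD := chain fy (fun s => s) (y0 f) x 1 _ _ _ (is_derive_id x) Hy0 (diffpt fy fyx fyy Hyx Hyy Cyx x Y)).
  simpl in HN, HD.
  assert (Hne : fy x Y <> 0) by (assert (m <= fy x Y) by (apply Hb; lra); lra).
  assert (HQ := is_derive_div (fun t => - fx t (y0 f t)) (fun t => fy t (y0 f t)) x _ _ (is_derive_opp _ x _ HN) HD Hne).
  unfold Pg, Qg. eapply is_derive_eq; [exact HQ|]. fold Y. unfold opp; simpl. unfold Pg, Y. field. exact Hne.
Qed.

Lemma Q_bound f fx fy fxx fxy fyx fyy m gamma : HF f fx fy m gamma -> HF2 fx fy fxx fxy fyx fyy ->
  exists K, 0 <= K /\ forall x, 0 < x < 1 -> Rabs (Qg fx fy fxx fxy fyx fyy x (y0 f x)) <= K.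
Proof.
  intros H H2. pose proof H as (Hc & Hcx & Hdx & Hdy & Hb & Hm).
  destruct H2 as (Hxx & Hxy & Hyx & Hyy & Hcy & Cxx & Cxy & Cyx & Cyy).
  set (G := fun t => Rabs (Qg fx fy fxx fxy fyx fyy (clamp t) (y0 f t))).
  assert (HG : forall t, continuity_pt G t).
  { intro t. unfold G, Qg, Pg.
    assert (C : forall F, (forall p, continuous (fun q : R * R => F (fst q) (snd q)) p) ->
      continuity_pt (fun s => F (clamp s) (y0 f s)) t).
    { intros F HF0. apply cont_comp2; auto. apply clamp_cont. apply (y0_cont f fx fy m gamma); auto. }
    assert (Hne : fy (clamp t) (y0 f t) <> 0) by (assert (m <= fy (clamp t) (y0 f t)) by (apply Hb; apply clamp_in); lra).
    apply cp_abs. apply cp_div. 2: (apply cp_pow2; apply C; auto). 2: (apply pow_nonzero; auto).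
    apply cp_opp. apply cp_minus; apply cp_mult.
    - apply cp_plus; [apply C; auto|]. apply cp_mult; [apply C; auto|].
      apply cp_div; [apply cp_opp; apply C; auto | apply C; auto | auto].
    - apply C; auto.
    - apply C; auto.
    - apply cp_plus; [apply C; auto|]. apply cp_mult; [apply C; auto|].
      apply cp_div; [apply cp_opp; apply C; auto | apply C; auto | auto]. }
  destruct (continuity_ab_maj G 0 1 ltac:(lra) (fun t _ => HG t)) as [M [HM _]].
  exists (G M). split; [unfold G; apply Rabs_pos|].
  intros x Hx. specialize (HM x ltac:(lra)). unfold G in HM. rewrite clamp_id in HM by lra. exact HM.
Qed.


Definition Phi K eps m B a t := K * eps ^ 2 / m + B * (exp (- (a * t)) + exp (- (a * (1 - t)))).

Lemma Phi_d K eps m B a t : is_derive (Phi K eps m B a) t (B * (- a * exp (- (a * t)) + a * exp (- (a * (1 - t))))).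
Proof. unfold Phi. auto_derive; auto. unfold Rminus; ring. Qed.

Lemma Phi_dd (B a t : R) : is_derive (fun t => B * (- a * exp (- (a * t)) + a * exp (- (a * (1 - t))))) t
   (B * a ^ 2 * (exp (- (a * t)) + exp (- (a * (1 - t))))).
Proof. auto_derive; auto. unfold Rminus; ring. Qed.

Lemma d_lin (s : R) (u v w : R -> R) du dv dw x : is_derive u x du -> is_derive v x dv -> is_derive w x dw -> is_derive (fun t => s*(u t - v t) - w t) x (s*(du - dv) - dw).
Proof. intros Hu Hv Hw. apply is_derive_Reals in Hu, Hv, Hw. apply is_derive_Reals.
apply (derivable_pt_lim_minus (fun t => s*(u t - v t)) w); auto.
apply (derivable_pt_lim_scal (fun t => u t - v t) s).
apply (derivable_pt_lim_minus u v); auto. Qed.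

Lemma slope2 f fx fy m gamma x u v : HF f fx fy m gamma -> 0 <= x <= 1 -> v <= u ->
  m * (u - v) <= f x u - f x v.
Proof.
  intros (Hc & Hcx & Hdx & Hdy & Hb & Hm) Hx Huv.
  apply (mono (fun t => f x t) (fun t => fy x t) m gamma); auto.
Qed.

Lemma barrier f fx fy fxx fxy fyx fyy m gamma K eps y (dy : R -> R) :
  HF f fx fy m gamma -> HF2 fx fy fxx fxy fyx fyy ->
  (forall x, 0 < x < 1 -> Rabs (Qg fx fy fxx fxy fyx fyy x (y0 f x)) <= K) ->
  0 < eps ->
  (forall x, 0 <= x <= 1 -> continuity_pt y x) ->
  (forall x, 0 < x < 1 -> is_derive y x (dy x) /\ is_derive dy x (f x (y x) / eps ^ 2)) ->
  y 0 = 0 -> y 1 = 0 ->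
  forall t, 0 <= t <= 1 ->
   Rabs (y t - y0 f t) <= Phi K eps m (Rmax (Rabs (y0 f 0)) (Rabs (y0 f 1))) (sqrt m / eps) t.
Proof.
  intros H H2 HK He Hyc Hyd Hy0 Hy1.
  pose proof H as (Hc & Hcx & Hdx & Hdy & Hb & Hm).
  set (B := Rmax (Rabs (y0 f 0)) (Rabs (y0 f 1))).
  set (a := sqrt m / eps).
  assert (Ha2 : a ^ 2 * eps ^ 2 = m).
  { unfold a. unfold Rdiv. rewrite Rpow_mult_distr, <- Rinv_pow by lra. rewrite pow2_sqrt by lra. field. lra. }
  assert (HB0 : Rabs (y0 f 0) <= B) by apply Rmax_l.
  assert (HB1 : Rabs (y0 f 1) <= B) by apply Rmax_r.
  assert (HBp : 0 <= B) by (pose proof (Rabs_pos (y0 f 0)); lra).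
  assert (HK0 : 0 <= K) by (pose proof (HK (1/2) ltac:(lra)); pose proof (Rabs_pos (Qg fx fy fxx fxy fyx fyy (1/2) (y0 f (1/2)))); lra).
  assert (Main : forall s, s * s = 1 -> forall t, 0 <= t <= 1 -> s * (y t - y0 f t) - Phi K eps m B a t <= 0).
  { intros s Hs.
    apply (MP (fun t => s * (y t - y0 f t) - Phi K eps m B a t)
              (fun t => s * (dy t - Pg fx fy t (y0 f t)) - B * (- a * exp (- (a * t)) + a * exp (- (a * (1 - t)))))
              (fun t => s * (f t (y t) / eps ^ 2 - Qg fx fy fxx fxy fyx fyy t (y0 f t)) - B * a ^ 2 * (exp (- (a * t)) + exp (- (a * (1 - t)))))).
    - intros t Ht. apply cp_minus.
      + apply (cp_mult (fun _ => s)); [apply continuity_pt_const; intros ? ?; auto|].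
        apply cp_minus; [apply Hyc; auto| apply (y0_cont f fx fy m gamma); auto].
      + apply (deriv_cont _ t _ (Phi_d K eps m B a t)).
    - intros t Ht. apply d_lin; [apply Hyd; auto| |apply Phi_d].
      apply (y0_der f fx fy m gamma); auto.
    - intros t Ht. apply d_lin; [apply Hyd; auto| |apply Phi_dd].
      apply (P_der f fx fy fxx fxy fyx fyy m gamma); auto.
    - rewrite Hy0. unfold Phi. rewrite Rmult_0_r, Ropp_0, exp_0.
      pose proof (exp_pos (- (a * (1 - 0)))).
      assert (0 <= K * eps ^ 2 / m) by (apply Rdiv_le_0_compat; [apply Rmult_le_pos; [lra| apply pow2_ge_0]|lra]).
      assert (s * (0 - y0 f 0) <= Rabs (y0 f 0)).
      { apply Rle_trans with (Rabs (s * (0 - y0 f 0))); [apply Rle_abs|].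
        rewrite Rabs_mult. replace (Rabs s) with 1. rewrite Rminus_0_l, Rabs_Ropp; lra.
        assert (Rabs s * Rabs s = 1) by (rewrite <- Rabs_mult, Hs; apply Rabs_R1). 
        pose proof (Rabs_pos s). nra. }
      nra.
    - rewrite Hy1. unfold Phi. rewrite Rminus_diag, Rmult_0_r, Ropp_0, exp_0.
      pose proof (exp_pos (- (a * 1))).
      assert (0 <= K * eps ^ 2 / m) by (apply Rdiv_le_0_compat; [apply Rmult_le_pos; [lra| apply pow2_ge_0]|lra]).
      assert (s * (0 - y0 f 1) <= Rabs (y0 f 1)).
      { apply Rle_trans with (Rabs (s * (0 - y0 f 1))); [apply Rle_abs|].
        rewrite Rabs_mult. replace (Rabs s) with 1. rewrite Rminus_0_l, Rabs_Ropp; lra.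
        assert (Rabs s * Rabs s = 1) by (rewrite <- Rabs_mult, Hs; apply Rabs_R1). 
        pose proof (Rabs_pos s). nra. }
      nra.
    - intros t Ht Hg.
      set (E := exp (- (a * t)) + exp (- (a * (1 - t)))) in *.
      assert (HE : 0 < E) by (unfold E; pose proof (exp_pos (- (a * t))); pose proof (exp_pos (- (a * (1 - t)))); lra).
      unfold Phi in Hg. fold E in Hg.
      set (e := y t - y0 f t) in *.
      assert (Hroot : f t (y0 f t) = 0) by (rewrite <- (clamp_id t) at 1 by lra; apply (y0_root f fx fy m gamma); auto).
      assert (HPhi : 0 <= K * eps ^ 2 / m + B * E).
      { assert (0 <= K * eps ^ 2 / m) by (apply Rdiv_le_0_compat; [apply Rmult_le_pos; [lra| apply pow2_ge_0]|lra]). nra. }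
      assert (Hse : m * (s * e) <= s * f t (y t)).
      { destruct (Rle_or_lt (y0 f t) (y t)) as [Hle|Hlt].
        - pose proof (slope2 f fx fy m gamma t (y t) (y0 f t) H ltac:(lra) Hle). rewrite Hroot in H0.
          assert (HsE : s = 1 \/ s = -1) by (assert ((s - 1) * (s + 1) = 0) by nra; destruct (Rmult_integral _ _ H1); [left|right]; lra).
          destruct HsE as [-> | ->]; unfold e in *; [lra|].
          lra.
        - pose proof (slope2 f fx fy m gamma t (y0 f t) (y t) H ltac:(lra) ltac:(lra)). rewrite Hroot in H0.
          assert (HsE : s = 1 \/ s = -1) by (assert ((s - 1) * (s + 1) = 0) by nra; destruct (Rmult_integral _ _ H1); [left|right]; lra).
          destruct HsE as [-> | ->]; unfold e in *; lra. }
      assert (HQ : s * Qg fx fy fxx fxy fyx fyy t (y0 f t) <= K).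
      { apply Rle_trans with (Rabs (s * Qg fx fy fxx fxy fyx fyy t (y0 f t))); [apply Rle_abs|].
        rewrite Rabs_mult. replace (Rabs s) with 1. rewrite Rmult_1_l; apply HK; auto.
        assert (Rabs s * Rabs s = 1) by (rewrite <- Rabs_mult, Hs; apply Rabs_R1). 
        pose proof (Rabs_pos s). nra. }
      assert (Heps2 : 0 < eps ^ 2) by (apply pow_lt; lra).
      apply (Rmult_lt_reg_r (eps ^ 2)); [lra|]. rewrite Rmult_0_l.
      replace ((s * (f t (y t) / eps ^ 2 - Qg fx fy fxx fxy fyx fyy t (y0 f t)) - B * a ^ 2 * E) * eps ^ 2)
        with (s * f t (y t) - eps ^ 2 * (s * Qg fx fy fxx fxy fyx fyy t (y0 f t)) - B * E * (a ^ 2 * eps ^ 2)) by (field; lra).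
      rewrite Ha2.
      assert (HKm : K * eps ^ 2 / m * m = K * eps ^ 2) by (field; lra).
      nra. }
  intros t Ht.
  assert (M1 := Main 1 ltac:(ring) t Ht). assert (M2 := Main (-1) ltac:(ring) t Ht).
  fold B a. apply Rabs_le. lra.
Qed.


Lemma dq (g : R -> R) a t d1 d2 : is_derive g (a + t) d1 -> is_derive g (a - t) d2 ->
  is_derive (fun s => g (a + s) + g (a - s)) t (d1 - d2).
Proof.
  intros H1 H2.
  assert (E1 : is_derive (fun s => g (a + s)) t (d1 * 1)).
  { apply is_derive_Reals. apply (derivable_pt_lim_comp (fun s => a + s) g). 
    apply is_derive_Reals. auto_derive; auto. apply is_derive_Reals; auto. }
  assert (E2 : is_derive (fun s => g (a - s)) t (d2 * -1)).
  { apply is_derive_Reals. apply (derivable_pt_lim_comp (fun s => a - s) g). 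
    apply is_derive_Reals. auto_derive; auto. apply is_derive_Reals; auto. }
  apply is_derive_Reals in E1, E2. apply is_derive_Reals.
  replace (d1 - d2) with (d1 * 1 + d2 * -1) by ring.
  apply (derivable_pt_lim_plus (fun s => g (a + s)) (fun s => g (a - s))); auto.
Qed.

Lemma d2_bound (g dg ddg : R -> R) a h K : 0 <= h ->
  (forall t, a - h <= t <= a + h -> is_derive g t (dg t) /\ is_derive dg t (ddg t) /\ Rabs (ddg t) <= K) ->
  Rabs (g (a + h) - 2 * g a + g (a - h)) <= 2 * K * h ^ 2.
Proof.
  intros Hh Hd.
  assert (HK : 0 <= K) by (destruct (Hd a ltac:(lra)) as [_ [_ HH]]; pose proof (Rabs_pos (ddg a)); lra).
  assert (Hq : forall t, 0 <= t <= h -> Rabs (dg (a + t) - dg (a - t)) <= 2 * K * h).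
  { intros t Ht.
    assert (HH := lip dg ddg (a - t) (a + t) K).
    rewrite Rmin_left, Rmax_right in HH by lra.
    replace (a + t - (a - t)) with (2 * t) in HH by ring.
    rewrite (Rabs_pos_eq (2 * t)) in HH by lra.
    assert (Rabs (dg (a + t) - dg (a - t)) <= K * (2 * t)).
    { apply HH; intros s Hs; apply Hd; lra. }
    nra. }
  assert (HL := lip (fun s => g (a + s) + g (a - s)) (fun s => dg (a + s) - dg (a - s)) 0 h (2 * K * h)).
  rewrite Rmin_left, Rmax_right in HL by lra.
  rewrite (Rminus_0_r h), (Rabs_pos_eq h) in HL by lra.
  replace (g (a + h) - 2 * g a + g (a - h)) with (g (a + h) + g (a - h) - (g (a + 0) + g (a - 0))) by (rewrite Rplus_0_r, Rminus_0_r; ring).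
  replace (2 * K * h ^ 2) with (2 * K * h * h) by ring.
  apply HL.
  - intros t Ht. apply dq; apply Hd; lra.
  - intros t Ht. apply Hq; lra.
Qed.


Lemma scheme_alg (g A D v0 v1 v2 F1 F2 : R) : g <> 0 -> D - A <> 0 ->
  g / ((D - A) + (D - A)) * ((A + D) / 2 * v0 - ((A + D) / 2 + (A + D) / 2) * v1 + (A + D) / 2 * v2
     - (D - A) / g * F1 - (D - A) / g * F2)
  = g * (A + D) / (4 * (D - A)) * (v0 - 2 * v1 + v2) - (F1 + F2) / 2.
Proof. intros. field. split; [auto|split; [auto|lra]]. Qed.

Lemma cosh_m1 z : cosh z - 1 = (exp z - 1) * (1 - exp (- z)) / 2.
Proof.
  unfold cosh. assert (exp z * exp (- z) = 1) by (rewrite <- exp_plus, Rplus_opp_r, exp_0; auto).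
  field_simplify. nra.
Qed.

Lemma cosh_lb z z0 : 0 < z0 -> z0 <= z -> z0 * (1 - exp (- z0)) / 2 <= cosh z - 1.
Proof.
  intros H0 H. rewrite cosh_m1.
  assert (z < exp z - 1) by (pose proof (exp_ineq1 z ltac:(lra)); lra).
  assert (exp (- z) <= exp (- z0)) by (destruct (Rle_lt_or_eq_dec z0 z H) as [Hl|He]; [apply Rlt_le, exp_increasing; lra| rewrite He; lra]).
  assert (exp (- z0) < 1) by (rewrite <- exp_0; apply exp_increasing; lra).
  nra.
Qed.

Lemma coef_eq beta z : 0 < beta -> 0 < z ->
  let A := beta / sinh z in let D := beta / tanh z in
  D - A = beta * (cosh z - 1) / sinh z /\ (A + D) / (D - A) = 1 + 2 / (cosh z - 1).
Proof.
  intros Hb Hz A D.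
  assert (Hs : 0 < sinh z).
  { unfold sinh. assert (exp (- z) < exp z) by (apply exp_increasing; lra). lra. }
  assert (Hc : 0 < cosh z - 1).
  { rewrite cosh_m1. assert (0 < exp z - 1) by (pose proof (exp_ineq1 z ltac:(lra)); lra).
    assert (exp (- z) < 1) by (rewrite <- exp_0; apply exp_increasing; lra). nra. }
  unfold A, D, tanh. split; field; repeat split; try lra.
  replace (beta * cosh z - beta) with (beta * (cosh z - 1)) by ring. apply Rmult_integral_contrapositive; split; lra.
Qed.

Lemma expl a b : a <= b -> exp a <= exp b.
Proof. intros H. destruct (Rle_lt_or_eq_dec a b H) as [Hl|He]; [apply Rlt_le, exp_increasing; lra| rewrite He; lra]. Qed.


Lemma div4 q : ((4 * q) / 4 = q)%nat.
Proof. rewrite Nat.mul_comm. apply Nat.div_mul. lia. Qed.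
Lemma div34 q : ((3 * (4 * q)) / 4 = 3 * q)%nat.
Proof. replace (3 * (4 * q))%nat with ((3 * q) * 4)%nat by lia. apply Nat.div_mul. lia. Qed.
Lemma div2' q : ((4 * q) / 2 = 2 * q)%nat.
Proof. replace (4 * q)%nat with ((2 * q) * 2)%nat by lia. apply Nat.div_mul. lia. Qed.

Lemma mesh_mid eps m q j : (0 < q)%nat -> (q <= j <= 3 * q)%nat ->
  shmesh eps m (4 * q) j = shlambda eps m (4 * q) + INR (j - q) * (2 * (1 - 2 * shlambda eps m (4 * q)) / INR (4 * q)).
Proof.
  intros Hq Hj. unfold shmesh. rewrite div4, div34.
  destruct (Nat.leb_spec j q).
  - assert (j = q) by lia. subst. rewrite Nat.sub_diag. rewrite mult_INR. simpl (INR 0).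
    assert (0 < INR q) by (apply lt_0_INR; lia). simpl. field. lra.
  - destruct (Nat.leb_spec j (3 * q)); [|lia]. reflexivity.
Qed.

Lemma mesh_left eps m q j : (0 < q)%nat -> (j <= q)%nat ->
  shmesh eps m (4 * q) j = INR j * (4 * shlambda eps m (4 * q) / INR (4 * q)).
Proof.
  intros Hq Hj. unfold shmesh. rewrite div4.
  destruct (Nat.leb_spec j q); [reflexivity|lia].
Qed.


Theorem lemma1 :
  forall (k : nat) (f : R -> R -> R) (m gamma C0 : R),
    (2 <= k)%nat ->
    Ck k f ->
    0 < m ->
    (forall x u l, 0 <= x <= 1 -> is_derive (fun t => f x t) u l ->
                   m <= l /\ l <= gamma) ->
    0 < C0 ->
    exists C : R, 0 < C /\
      forall (eps : R) (N : nat) (y : R -> R),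
        0 < eps ->
        (0 < N)%nat -> (N mod 4 = 0)%nat ->
        shlambda eps m N = 2 * eps * ln (INR N) / sqrt m ->
        eps <= C0 / INR N ->
        (forall x, 0 <= x <= 1 -> continuity_pt y x) ->
        (exists dy : R -> R, forall x, 0 < x < 1 ->
            is_derive y x (dy x) /\
            is_derive dy x (f x (y x) / (eps ^ 2))) ->
        y 0 = 0 -> y 1 = 0 ->
        forall i : nat,
          (N / 4 <= i)%nat -> (i <= N / 2 - 1)%nat ->
          let x := xm eps m N in
          x (N / 4)%nat <= x (i - 1)%nat <= 1 / 2 ->
          x (N / 4)%nat <= x i <= 1 / 2 ->
          x (N / 4)%nat <= x (i + 1)%nat <= 1 / 2 ->
          Rabs (Fop eps m gamma N f (fun j => y (x j)) i) <= C / (INR N) ^ 2.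
Proof.
  intros k f m gamma C0 Hk Hf Hm Hfy HC0.
  pose proof (Ck_ge k f Hk Hf) as Hf2. clear Hf. rename Hf2 into Hf.
  destruct Hf as [Hcf [fx [fy [Hdx [Hdy [Hfx Hfy']]]]]].
  destruct Hfx as [Hcfx [fxx [fxy [Hxx [Hxy [Cxx Cxy]]]]]].
  destruct Hfy' as [Hcfy [fyx [fyy [Hyx [Hyy [Cyx Cyy]]]]]].
  assert (Hb : forall x u, 0 <= x <= 1 -> m <= fy x u <= gamma) by (intros; apply (Hfy x u); auto).
  assert (Hmg : m <= gamma) by (destruct (Hb 0 0); lra).
  simpl in Hcf, Hcfx, Hcfy, Cxx, Cxy, Cyx, Cyy.
  assert (H : HF f fx fy m gamma).
  { unfold HF. split; [exact Hcf|]. split; [exact Hcfx|]. split; [exact Hdx|]. split; [exact Hdy|]. split; [exact Hb|exact Hm]. }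
  assert (H2 : HF2 fx fy fxx fxy fyx fyy).
  { unfold HF2. split; [exact Hxx|]. split; [exact Hxy|]. split; [exact Hyx|]. split; [exact Hyy|]. split; [exact Hcfy|]. split; [exact Cxx|]. split; [exact Cxy|]. split; [exact Cyx|exact Cyy]. }
  destruct (Q_bound f fx fy fxx fxy fyx fyy m gamma H H2) as [K [HK0 HK]].
  set (B := Rmax (Rabs (y0 f 0)) (Rabs (y0 f 1))).
  assert (HB : 0 <= B) by (unfold B; pose proof (Rabs_pos (y0 f 0)); pose proof (Rmax_l (Rabs (y0 f 0)) (Rabs (y0 f 1))); lra).
  set (z0 := sqrt gamma / C0).
  assert (Hz0 : 0 < z0) by (unfold z0; apply Rdiv_lt_0_compat; [apply sqrt_lt_R0; lra| lra]).
  set (d0 := z0 * (1 - exp (- z0)) / 2).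
  assert (Hd0 : 0 < d0).
  { unfold d0. assert (exp (- z0) < 1) by (rewrite <- exp_0; apply exp_increasing; lra). nra. }
  set (Ac := gamma / 4 * (1 + 2 / d0)).
  assert (HAc : 0 < Ac) by (unfold Ac; assert (0 < 2 / d0) by (apply Rdiv_lt_0_compat; lra); nra).
  set (Ec := K * C0 ^ 2 / m + 2 * B).
  assert (HEc : 0 <= Ec) by (unfold Ec; assert (0 <= K * C0 ^ 2 / m) by (apply Rdiv_le_0_compat; [apply Rmult_le_pos; [lra| apply pow2_ge_0]|lra]); lra).
  exists (Ac * (8 * K + 4 * Ec) + gamma * (K + Ec) + 1). split.
  { assert (0 <= Ac * (8 * K + 4 * Ec)) by (apply Rmult_le_pos; lra).
    assert (0 <= gamma * (K + Ec)) by (apply Rmult_le_pos; lra). lra. }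
  intros eps N y Heps HN Hmod Hlam Hepsn Hyc [dy Hyd] Hy0 Hy1 i Hi1 Hi2 x Hx1 Hx2 Hx3.
  assert (Hq : exists q, N = (4 * q)%nat) by (exists (N / 4)%nat; pose proof (Nat.div_mod_eq N 4); lia).
  destruct Hq as [q ->].
  rewrite div4 in Hi1, Hx1, Hx2, Hx3. rewrite div2' in Hi2.
  assert (Hq0 : (0 < q)%nat) by lia.
  set (Nr := INR (4 * q)) in *.
  assert (HNr : Nr = 4 * INR q) by (unfold Nr; rewrite mult_INR; simpl; ring).
  assert (HNr4 : 4 <= Nr) by (rewrite HNr; assert (1 <= INR q) by (apply (le_INR 1); lia); lra).
  set (lam := shlambda eps m (4 * q)) in *.
  assert (Hln : 0 < ln Nr) by (rewrite <- ln_1; apply ln_increasing; lra).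
  assert (Hlam0 : 0 < lam) by (rewrite Hlam; apply Rdiv_lt_0_compat; [nra| apply sqrt_lt_R0; lra]).
  assert (Hlam1 : lam <= 1 / 4).
  { assert (Hmin : lam = Rmin (1/4) (2 * eps * ln Nr / sqrt m)) by reflexivity.
    pose proof (Rmin_l (1/4) (2 * eps * ln Nr / sqrt m)). lra. }
  assert (HNr0 : 0 < Nr) by lra.
  assert (Hxj : forall j, (j <= q)%nat -> x j = INR j * (4 * lam / Nr)).
  { intros j Hj. unfold x, xm. rewrite mesh_left by lia. reflexivity. }
  assert (Hxq : x q = lam) by (rewrite Hxj by lia; rewrite HNr; field; apply not_0_INR; lia).
  assert (Hip : (q + 1 <= i)%nat).
  { destruct (Compare_dec.le_lt_dec (q + 1) i) as [|Hlt]; auto. exfalso.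
    assert (i = q) by lia. subst i.
    rewrite Hxq, Hxj in Hx1 by lia.
    assert (INR (q - 1) < INR q) by (apply lt_INR; lia).
    assert (0 < 4 * lam / Nr) by (apply Rdiv_lt_0_compat; lra).
    assert (INR (q - 1) * (4 * lam / Nr) < lam).
    { apply Rlt_le_trans with (INR q * (4 * lam / Nr)); [apply Rmult_lt_compat_r; auto|].
      right. rewrite HNr; field; apply not_0_INR; lia. }
    lra. }
  destruct (Nat.le_exists_sub (q + 1) i Hip) as [p [Hp _]]. subst i.
  set (h := 2 * (1 - 2 * lam) / Nr).
  assert (Hxm : forall j, (q <= j <= 3 * q)%nat -> x j = lam + INR (j - q) * h).
  { intros j Hj. unfold x, xm. rewrite mesh_mid by lia. reflexivity. }
  assert (EX0 : x (p + (q + 1) - 1)%nat = lam + INR p * h).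
  { rewrite Hxm by lia. do 3 f_equal. lia. }
  assert (EX1 : x (p + (q + 1))%nat = lam + (INR p + 1) * h).
  { rewrite Hxm by lia. replace (p + (q + 1) - q)%nat with (p + 1)%nat by lia. rewrite plus_INR. reflexivity. }
  assert (EX2 : x (p + (q + 1) + 1)%nat = lam + (INR p + 2) * h).
  { rewrite Hxm by lia. replace (p + (q + 1) + 1 - q)%nat with (p + 2)%nat by lia. rewrite plus_INR. reflexivity. }
  unfold Fop.
  rewrite (proj2 (Nat.eqb_neq _ _)) by lia. rewrite (proj2 (Nat.eqb_neq _ _)) by lia.
  assert (El1 : ell eps m (4 * q) (p + (q + 1)) = h).
  { unfold ell. change (xm eps m (4 * q)) with x. rewrite EX1, EX0. ring. }
  assert (El2 : ell eps m (4 * q) (p + (q + 1) + 1) = h).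
  { unfold ell. replace (p + (q + 1) + 1 - 1)%nat with (p + (q + 1))%nat by lia.
    change (xm eps m (4 * q)) with x. rewrite EX2, EX1. ring. }
  unfold Ddd, aa, dd. rewrite El1, El2.
  change (xm eps m (4 * q)) with x.
  set (bt := beta eps gamma).
  set (A := bt / sinh (bt * h)). set (D := bt / tanh (bt * h)).
  assert (Hg0 : 0 < gamma) by lra.
  assert (Hbt : 0 < bt) by (unfold bt, beta; apply Rdiv_lt_0_compat; [apply sqrt_lt_R0|]; lra).
  assert (Hh1 : 1 / Nr <= h) by (unfold h; apply Rmult_le_compat_r; [apply Rlt_le, Rinv_0_lt_compat; lra| lra]).
  assert (Hh2 : h <= 2 / Nr) by (unfold h; apply Rmult_le_compat_r; [apply Rlt_le, Rinv_0_lt_compat; lra| lra]).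
  assert (Hh0 : 0 < h) by (assert (0 < 1 / Nr) by (apply Rdiv_lt_0_compat; lra); lra).
  assert (Hz : z0 <= bt * h).
  { unfold z0, bt, beta.
    assert (Hce : eps <= C0 * h).
    { apply Rle_trans with (C0 / Nr); auto. unfold Rdiv. rewrite Rmult_comm.
      replace (C0 * h) with (h * C0) by ring. apply Rmult_le_compat_r; [lra|]. lra. }
    assert (Hsg : 0 < sqrt gamma) by (apply sqrt_lt_R0; lra).
    replace (sqrt gamma / eps * h) with (sqrt gamma / C0 + sqrt gamma * (C0 * h - eps) / (eps * C0)) by (field; lra).
    assert (0 <= sqrt gamma * (C0 * h - eps) / (eps * C0)).
    { apply Rdiv_le_0_compat; [apply Rmult_le_pos; lra| nra]. }
    lra. }
  destruct (coef_eq bt (bt * h) Hbt ltac:(lra)) as [HDA Hratio]. fold A D in HDA, Hratio.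
  assert (Hc1 : d0 <= cosh (bt * h) - 1) by (apply cosh_lb; lra).
  assert (Hs : 0 < sinh (bt * h)).
  { unfold sinh. assert (exp (- (bt * h)) < exp (bt * h)) by (apply exp_increasing; nra). lra. }
  assert (HDA0 : 0 < D - A) by (rewrite HDA; apply Rdiv_lt_0_compat; [apply Rmult_lt_0_compat|]; lra).
  rewrite scheme_alg by lra.
  assert (Hcoef : 0 <= gamma * (A + D) / (4 * (D - A)) <= Ac).
  { replace (gamma * (A + D) / (4 * (D - A))) with (gamma / 4 * ((A + D) / (D - A))) by (field; lra).
    rewrite Hratio. unfold Ac.
    assert (0 < 2 / (cosh (bt * h) - 1)) by (apply Rdiv_lt_0_compat; lra).
    assert (2 / (cosh (bt * h) - 1) <= 2 / d0).
    { unfold Rdiv. apply Rmult_le_compat_l; [lra|]. apply Rinv_le_contravar; lra. }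
    split; [apply Rmult_le_pos; lra|]. apply Rmult_le_compat_l; lra. }
  set (c := gamma * (A + D) / (4 * (D - A))) in *.
  rewrite EX0, EX1, EX2 in *.
  set (X0 := lam + INR p * h) in *. set (X1 := lam + (INR p + 1) * h) in *. set (X2 := lam + (INR p + 2) * h) in *.
  assert (HX01 : X1 = X0 + h) by (unfold X0, X1; ring).
  assert (HX12 : X2 = X1 + h) by (unfold X1, X2; ring).
  assert (HX0 : lam <= X0) by (unfold X0; assert (0 <= INR p) by apply pos_INR; nra).
  assert (HX2 : X2 <= 1 / 2) by lra.
  set (W := / Nr ^ 2).
  assert (HW : 0 < W) by (unfold W; apply Rinv_0_lt_compat; nra).
  assert (Hh2W : h ^ 2 <= 4 * W).
  { unfold W. replace (4 * / Nr ^ 2) with ((2 / Nr) ^ 2) by (field; lra). apply pow_incr; lra. }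
  assert (Hbar : forall t, lam <= t <= 1 / 2 -> Rabs (y t - y0 f t) <= Ec * W).
  { intros t Ht.
    eapply Rle_trans; [apply (barrier f fx fy fxx fxy fyx fyy m gamma K eps y dy H H2 HK Heps Hyc Hyd Hy0 Hy1 t); lra|].
    fold B. unfold Phi.
    set (a := sqrt m / eps).
    assert (Ha : a * lam = 2 * ln Nr).
    { unfold a. rewrite Hlam. field. split; [apply Rgt_not_eq, sqrt_lt_R0; lra| lra]. }
    assert (Ha0 : 0 < a) by (unfold a; apply Rdiv_lt_0_compat; [apply sqrt_lt_R0|]; lra).
    assert (HexpW : exp (- (a * lam)) = W).
    { rewrite Ha. unfold W. rewrite exp_Ropp. f_equal.
      replace (2 * ln Nr) with (ln Nr + ln Nr) by ring. rewrite exp_plus, exp_ln by lra. ring. }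
    assert (E1 : exp (- (a * t)) <= W) by (rewrite <- HexpW; apply expl; nra).
    assert (E2 : exp (- (a * (1 - t))) <= W) by (rewrite <- HexpW; apply expl; nra).
    assert (Heps2 : eps ^ 2 <= C0 ^ 2 * W).
    { unfold W. replace (C0 ^ 2 * / Nr ^ 2) with ((C0 / Nr) ^ 2) by (field; lra). apply pow_incr; lra. }
    assert (K * eps ^ 2 / m <= K * C0 ^ 2 / m * W).
    { unfold Rdiv. replace (K * C0 ^ 2 * / m * W) with (K * / m * (C0 ^ 2 * W)) by ring.
      replace (K * eps ^ 2 * / m) with (K * / m * eps ^ 2) by ring.
      apply Rmult_le_compat_l; [apply Rmult_le_pos; [lra| apply Rlt_le, Rinv_0_lt_compat; lra]| lra]. }
    unfold Ec. nra. }
  assert (Hd2gen : forall a hh, 0 <= hh -> 0 < a - hh -> a + hh < 1 ->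
     Rabs (y0 f (a + hh) - 2 * y0 f a + y0 f (a - hh)) <= 2 * K * hh ^ 2).
  { intros a hh Hhh Ha1 Ha2.
    apply (d2_bound (y0 f) (fun t => Pg fx fy t (y0 f t)) (fun t => Qg fx fy fxx fxy fyx fyy t (y0 f t))); auto.
    intros t Ht. split; [|split].
    - apply (y0_der f fx fy m gamma); auto; lra.
    - apply (P_der f fx fy fxx fxy fyx fyy m gamma); auto; lra.
    - apply HK; lra. }
  assert (Hfmid : forall M u, 0 <= M <= 1 -> Rabs (f M u) <= gamma * Rabs (u - y0 f M)).
  { intros M u HM.
    assert (Hr : f M (y0 f M) = 0) by (rewrite <- (clamp_id M) at 1 by lra; apply (y0_root f fx fy m gamma); auto).
    destruct (slope f fx fy m gamma M u (y0 f M) H HM) as [_ Hs2]. rewrite Hr, Rminus_0_r in Hs2. exact Hs2. }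
  assert (Hy0D2 : Rabs (y0 f X0 - 2 * y0 f X1 + y0 f X2) <= 2 * K * h ^ 2).
  { assert (HH := Hd2gen X1 h ltac:(lra) ltac:(lra) ltac:(lra)).
    replace (X1 + h) with X2 in HH by lra. replace (X1 - h) with X0 in HH by lra.
    replace (y0 f X0 - 2 * y0 f X1 + y0 f X2) with (y0 f X2 - 2 * y0 f X1 + y0 f X0) by ring. exact HH. }
  assert (Hm1 : Rabs (y0 f X1 - 2 * y0 f ((X0 + X1) / 2) + y0 f X0) <= 2 * K * (h / 2) ^ 2).
  { assert (HH := Hd2gen ((X0 + X1) / 2) (h / 2) ltac:(lra) ltac:(lra) ltac:(lra)).
    replace ((X0 + X1) / 2 + h / 2) with X1 in HH by lra. replace ((X0 + X1) / 2 - h / 2) with X0 in HH by lra. exact HH. }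
  assert (Hm2 : Rabs (y0 f X2 - 2 * y0 f ((X1 + X2) / 2) + y0 f X1) <= 2 * K * (h / 2) ^ 2).
  { assert (HH := Hd2gen ((X1 + X2) / 2) (h / 2) ltac:(lra) ltac:(lra) ltac:(lra)).
    replace ((X1 + X2) / 2 + h / 2) with X2 in HH by lra. replace ((X1 + X2) / 2 - h / 2) with X1 in HH by lra. exact HH. }
  assert (He0 := Hbar X0 ltac:(lra)). assert (He1 := Hbar X1 ltac:(lra)). assert (He2 := Hbar X2 ltac:(lra)).
  assert (HF1 := Hfmid ((X0 + X1) / 2) ((y X0 + y X1) / 2) ltac:(lra)).
  assert (HF2 := Hfmid ((X1 + X2) / 2) ((y X1 + y X2) / 2) ltac:(lra)).
  assert (HKh : K * h ^ 2 <= 4 * K * W) by nra.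
  set (EW := Ec * W) in *.
  assert (HKW : K * (h / 2) ^ 2 = K * h ^ 2 / 4) by field.
  apply Rabs_le_between in Hy0D2, Hm1, Hm2, He0, He1, He2.
  assert (HD2 : Rabs (y X0 - 2 * y X1 + y X2) <= 8 * K * W + 4 * EW).
  { apply Rabs_le_between. lra. }
  assert (HG1 : Rabs ((y X0 + y X1) / 2 - y0 f ((X0 + X1) / 2)) <= K * W + EW).
  { apply Rabs_le_between. lra. }
  assert (HG2 : Rabs ((y X1 + y X2) / 2 - y0 f ((X1 + X2) / 2)) <= K * W + EW).
  { apply Rabs_le_between. lra. }
  assert (HcD : Rabs (c * (y X0 - 2 * y X1 + y X2)) <= Ac * (8 * K * W + 4 * EW)).
  { rewrite Rabs_mult, (Rabs_pos_eq c) by lra. apply Rmult_le_compat; try lra. apply Rabs_pos. }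
  assert (HF1' : Rabs (f ((X0 + X1) / 2) ((y X0 + y X1) / 2)) <= gamma * (K * W + EW)).
  { eapply Rle_trans; [exact HF1|]. apply Rmult_le_compat_l; lra. }
  assert (HF2' : Rabs (f ((X1 + X2) / 2) ((y X1 + y X2) / 2)) <= gamma * (K * W + EW)).
  { eapply Rle_trans; [exact HF2|]. apply Rmult_le_compat_l; lra. }
  replace ((Ac * (8 * K + 4 * Ec) + gamma * (K + Ec) + 1) / Nr ^ 2)
    with (Ac * (8 * K * W + 4 * EW) + gamma * (K * W + EW) + W) by (unfold EW, W; field; lra).
  apply Rabs_le_between in HcD, HF1', HF2'. apply Rabs_le_between. lra.
Qed.
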